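(* Let $\mathsf C=(C_1,\dots,C_n)$ be an $n$-outcome observable on a Hilbert space $\mathcal H_d$ of finite dimension $d$. Then $$\sup_{\mathsf A}\|\mathsf C-\mathsf A\|=2\big(1-b(\mathsf C)\big),$$ where the supremum is over all $n$-outcome observables $\mathsf A=(A_1,\dots,A_n)$ on $\mathcal H_d$ and $\|\mathsf C-\mathsf A\|=\sup_{\varrho}\sum_{j=1}^n|\operatorname{tr}(\varrho(C_j-A_j))|$, the supremum being over density operators $\varrho$ on $\mathcal H_d$.
   Context: An $n$-outcome observable on $\mathcal H_d$ is an $n$-tuple of positive operators summing to $I$; these form a convex set $Z$ under componentwise convex combination. The norm $\|\cdot\|$ above is the base norm (equivalently completely bounded norm) for observables. For $x,y\in Z$, the weight function is $t_y(x)=\sup\{0\leq t<1 : \frac{y-tx}{1-t}\in Z\}$, and the boundariness of $y$ is $b(y)=\inf_{x\in Z}t_y(x)$. (Here $b(\mathsf C)$ equals the smallest eigenvalue among all $C_j$.) *)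

(* Defs.v *)
From HB Require Import structures.
From mathcomp Require Import all_boot all_order all_algebra.
From mathcomp Require Import complex.
From mathcomp Require Import boolp classical_sets reals.
Set Implicit Arguments. Unset Strict Implicit. Unset Printing Implicit Defensive.
Import Order.TTheory GRing.Theory Num.Theory.
Local Open Scope ring_scope.
Local Open Scope complex_scope.
Local Open Scope ring_scope.

Section QDefs.
Variables (R : realType) (d n : nat).
Local Notation C := R[i].

Definition adjmx m p (A : 'M[C]_(m, p)) : 'M[C]_(p, m) := (map_mx (@conjc R) A)^T.

Definition psd (A : 'M[C]_d) : Prop :=
  forall v : 'cV[C]_d, 0 <= (adjmx v *m A *m v) 0 0.

Definition observable (A : 'I_n -> 'M[C]_d) : Prop :=
  (forall j, psd (A j)) /\ \sum_(j < n) A j = 1%:M.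

Definition density (rho : 'M[C]_d) : Prop := psd rho /\ \tr rho = 1.

Definition obs_dist (Cobs A : 'I_n -> 'M[C]_d) : R :=
  sup [set (\sum_(j < n) @complex.Re R `|\tr (rho *m (Cobs j - A j))|) | rho in density].

Definition wcomb (y x : 'I_n -> 'M[C]_d) (t : R) : 'I_n -> 'M[C]_d :=
  fun j => ((1 - t)^-1)%:C *: (y j - t%:C *: x j).

Definition weight (y x : 'I_n -> 'M[C]_d) : R :=
  sup [set t : R | 0 <= t < 1 /\ observable (wcomb y x t)].

Definition boundariness (y : 'I_n -> 'M[C]_d) : R :=
  inf [set weight y x | x in observable].

End QDefs.

(* Main.v *)
Require Import Defs.
From HB Require Import structures.
From mathcomp Require Import all_boot all_order all_algebra.
From mathcomp Require Import complex.
From mathcomp Require Import boolp classical_sets reals.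
Local Open Scope classical_set_scope.
Import Order.TTheory GRing.Theory Num.Theory.
Local Open Scope ring_scope.
Local Open Scope complex_scope.
Local Open Scope ring_scope.
From mathcomp Require Import lra ring.
From mathcomp Require Import sesquilinear spectral.
Set Implicit Arguments. Unset Strict Implicit. Unset Printing Implicit Defensive.

Section S.
Variable R : realType.
Local Notation C := R[i].

Lemma adjmxD m p (A B : 'M[C]_(m, p)) : adjmx (A + B) = adjmx A + adjmx B.
Proof. by rewrite /adjmx map_mxD linearD. Qed.

Lemma adjmxN m p (A : 'M[C]_(m, p)) : adjmx (- A) = - adjmx A.
Proof. by rewrite /adjmx map_mxN linearN. Qed.

Lemma adjmxB m p (A B : 'M[C]_(m, p)) : adjmx (A - B) = adjmx A - adjmx B.
Proof. by rewrite adjmxD adjmxN. Qed.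

Lemma adjmxZ m p c (A : 'M[C]_(m, p)) : adjmx (c *: A) = conjc c *: adjmx A.
Proof. by rewrite /adjmx map_mxZ linearZ. Qed.

Lemma adjmxM m p r (A : 'M[C]_(m, p)) (B : 'M[C]_(p, r)) :
  adjmx (A *m B) = adjmx B *m adjmx A.
Proof. by rewrite /adjmx map_mxM trmx_mul. Qed.

Lemma adjmxK m p (A : 'M[C]_(m, p)) : adjmx (adjmx A) = A.
Proof.
by rewrite /adjmx map_trmx trmxK -map_mx_comp; apply/matrixP=> i j; rewrite !mxE /= conjcK.
Qed.

Lemma adjmxE m p (A : 'M[C]_(m, p)) i j : adjmx A i j = conjc (A j i).
Proof. by rewrite !mxE. Qed.

Lemma adj_delta m p (i : 'I_m) (j : 'I_p) : adjmx (delta_mx i j : 'M[C]_(m,p)) = delta_mx j i.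
Proof.
apply/matrixP=> a b; rewrite !mxE andbC.
by rewrite conjc_nat.
Qed.

Lemma adj_scalar m (c : C) : adjmx (c%:M : 'M[C]_m) = (conjc c)%:M.
Proof.
apply/matrixP=> a b; rewrite !mxE.
rewrite [b == a]eq_sym; case: (a == b); first by []. by rewrite !mulr0n conjc0.
Qed.


Lemma geC0 (z : C) : 0 <= z -> z = (complex.Re z)%:C.
Proof. by case: z => a b; rewrite lecE /= => /andP[/eqP -> _]. Qed.

Lemma geC0_conj (z : C) : 0 <= z -> conjc z = z.
Proof. by move=> /geC0 ->; rewrite conjc_real. Qed.

Lemma herm_aux (x y aa bb : C) :
  conjc (aa + 1 * x + (conjc 1 * (y + 1 * bb))) = aa + 1 * x + (conjc 1 * (y + 1 * bb)) ->
  conjc (aa + 'i * x + (conjc 'i * (y + 'i * bb))) = aa + 'i * x + (conjc 'i * (y + 'i * bb)) ->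
  conjc aa = aa -> conjc bb = bb -> conjc y = x.
Proof.
case: x => x1 x2; case: y => y1 y2; case: aa => a1 a2; case: bb => b1 b2.
move=> /eqP; rewrite eq_complex /= => /andP[/eqP h1 /eqP h2].
move=> /eqP; rewrite eq_complex /= => /andP[/eqP h3 /eqP h4].
move=> /eqP; rewrite eq_complex /= => /andP[/eqP h5 /eqP h6].
move=> /eqP; rewrite eq_complex /= => /andP[/eqP h7 /eqP h8].
apply/eqP; rewrite eq_complex /=; apply/andP; split; apply/eqP; lra.
Qed.


Variable d : nat.
Definition form (A : 'M[C]_d) (u w : 'cV[C]_d) : C := (adjmx u *m A *m w) 0 0.

Lemma formDl A u1 u2 w : form A (u1 + u2) w = form A u1 w + form A u2 w.
Proof. by rewrite /form adjmxD !mulmxDl mxE. Qed.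
Lemma formDr A u w1 w2 : form A u (w1 + w2) = form A u w1 + form A u w2.
Proof. by rewrite /form !mulmxDr mxE. Qed.
Lemma formZl A c u w : form A (c *: u) w = conjc c * form A u w.
Proof. by rewrite /form adjmxZ -!scalemxAl mxE. Qed.
Lemma formZr A c u w : form A u (c *: w) = c * form A u w.
Proof. by rewrite /form -scalemxAr mxE. Qed.
Lemma form_delta A i j : form A (delta_mx i 0) (delta_mx j 0) = A i j :> C.
Proof. by rewrite /form adj_delta -rowE -colE !mxE. Qed.

Lemma psd_herm (A : 'M[C]_d) : psd A -> adjmx A = A.
Proof.
move=> pA; apply/matrixP => i j; rewrite adjmxE.
have key c : form A (delta_mx i 0 + c *: delta_mx j 0) (delta_mx i 0 + c *: delta_mx j 0) =
   A i i + c * A i j + (conjc c * (A j i + c * A j j)).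
  by rewrite formDl !formDr !formZl !formZr !form_delta mulrDr.
have pc c : conjc (A i i + c * A i j + (conjc c * (A j i + c * A j j))) =
   A i i + c * A i j + (conjc c * (A j i + c * A j j)).
  by rewrite -key geC0_conj //; exact: pA.
have dg k : conjc (A k k) = A k k.
  by rewrite -form_delta geC0_conj //; exact: pA.
exact: (herm_aux (pc 1) (pc 'i) (dg i) (dg j)).
Qed.

Local Open Scope sesquilinear_scope.
Lemma adjmx_t m p (A : 'M[C]_(m, p)) : adjmx A = A ^t*.
Proof. by rewrite /adjmx map_trmx. Qed.

Lemma entry_form (P X : 'M[C]_d) i :
  (P *m X *m P ^t*) i i = form X (adjmx (row i P)) (adjmx (row i P)).
Proof.
rewrite /form adjmxK !mxE; apply: eq_bigr => k _; rewrite !mxE; congr (_ * _).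
by apply: eq_bigr => l _; rewrite !mxE.
Qed.

Lemma tr_psd (rho M : 'M[C]_d) : psd rho -> psd M -> 0 <= \tr (rho *m M).
Proof.
move=> prho pM.
have herm := psd_herm prho.
have nrm : rho \is normalmx by apply/normalmxP; rewrite -adjmx_t herm.
have Pu := spectral_unitarymx rho.
have E := orthomx_spectralP nrm.
set P := spectralmx rho in E Pu *; set D := spectral_diag rho in E *.
rewrite (invmx_unitary Pu) in E.
have HD : P *m rho *m P ^t* = diag_mx D.
  by rewrite E !mulmxA (unitarymxP Pu) mul1mx mulmxtVK.
rewrite E -!mulmxA mxtrace_mulC -!mulmxA mxtrace_mulC !mulmxA.
rewrite /mxtrace; apply: sumr_ge0 => i _.
rewrite mul_mx_diag mxE; apply: mulr_ge0.
  by rewrite entry_form; exact: pM.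
have -> : D 0 i = diag_mx D i i by rewrite mxE eqxx mulr1n.
by rewrite -HD entry_form; exact: prho.
Qed.

Lemma mx11_mul m (A : 'M[C]_(1, m)) (B : 'M[C]_(m, 1)) (D : 'M[C]_(1,1)) :
  (A *m B *m D) 0 0 = (A *m B) 0 0 * D 0 0.
Proof. by rewrite mxE big_ord1. Qed.

Lemma tr11 (A : 'M[C]_1) : \tr A = A 0 0.
Proof. by rewrite /mxtrace big_ord1. Qed.

Lemma adj11 m (A : 'M[C]_(1, m)) (B : 'M[C]_(m, 1)) :
  (adjmx B *m adjmx A) 0 0 = conjc ((A *m B) 0 0).
Proof. by rewrite -adjmxM adjmxE. Qed.

Lemma psd1 : psd (1%:M : 'M[C]_d).
Proof.
move=> v; rewrite mulmx1 mxE; apply: sumr_ge0 => k _; rewrite !mxE mulrC.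
exact: mulcJ_ge0.
Qed.

Lemma psd_form (A : 'M[C]_d) v : psd A -> 0 <= form A v v.
Proof. by move=> h; exact: h. Qed.

Definition rk1 (v : 'cV[C]_d) : 'M[C]_d := (form 1%:M v v)^-1 *: (v *m adjmx v).

Lemma rk1_tr (v : 'cV[C]_d) (M : 'M[C]_d) : form 1%:M v v != 0 ->
  \tr (rk1 v *m M) = (form 1%:M v v)^-1 * form M v v.
Proof.
move=> nz; rewrite /rk1 -scalemxAl mxtraceZ; congr (_ * _).
by rewrite -mulmxA mxtrace_mulC tr11 /form.
Qed.

Lemma rk1_density (v : 'cV[C]_d) : form 1%:M v v != 0 -> density (rk1 v).
Proof.
move=> nz; split; last first.
  by rewrite -[rk1 v]mulmx1 rk1_tr // mulVf.
move=> u; rewrite /rk1 -scalemxAr -scalemxAl mxE; apply: mulr_ge0.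
  by rewrite invr_ge0; apply: psd1.
rewrite !mulmxA -[adjmx u *m v *m adjmx v *m u]mulmxA mxE big_ord1.
have -> : adjmx v *m u = adjmx (adjmx u *m v) by rewrite adjmxM adjmxK.
rewrite adjmxE.
exact: mulcJ_ge0.
Qed.

Lemma formB A B u w : form (A - B) u w = form A u w - form B u w.
Proof.
have h (X Y : 'M[C]_1) : (X - Y) 0 0 = X 0 0 - Y 0 0 by rewrite !mxE.
by rewrite /form mulmxBr mulmxBl h.
Qed.
Lemma formZA c A u w : form (c *: A) u w = c * form A u w.
Proof. by rewrite /form -scalemxAr -scalemxAl mxE. Qed.
Lemma form_sum m (A : 'I_m -> 'M[C]_d) u w : form (\sum_k A k) u w = \sum_k form (A k) u w.
Proof. by rewrite /form mulmx_sumr mulmx_suml summxE. Qed.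

Lemma normC_real (r : R) : `|r%:C| = `|r|%:C.
Proof. by rewrite normc_def /= expr0n /= addr0 sqrtr_sqr. Qed.

Lemma tr_real (rho A : 'M[C]_d) : psd rho -> psd A ->
  \tr (rho *m A) = (complex.Re (\tr (rho *m A)))%:C /\ 0 <= complex.Re (\tr (rho *m A)).
Proof.
move=> pr pA; have h := tr_psd pr pA; split; first exact: geC0.
by move: h; rewrite lecE => /andP[].
Qed.

Lemma sum_tr m (rho : 'M[C]_d) (A : 'I_m -> 'M[C]_d) : density rho -> observable A ->
  \sum_k \tr (rho *m A k) = 1.
Proof.
move=> [pr tr1] [pA sA].
by rewrite -raddf_sum -mulmx_sumr sA mulmx1; exact: tr1.
Qed.

Lemma sum_Re m (rho : 'M[C]_d) (A : 'I_m -> 'M[C]_d) : density rho -> observable A ->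
  \sum_k complex.Re (\tr (rho *m A k)) = 1.
Proof.
move=> dr oA; apply: complexI.
rewrite rmorph_sum /= -[1%:C](sum_tr dr oA); apply: eq_bigr => k _.
by rewrite -(tr_real dr.1 (oA.1 k)).1.
Qed.
End S.

Section Main.
Variables (R : realType) (d n : nat) (Cobs : 'I_n -> 'M[R[i]]_d).
Hypothesis hC : observable Cobs.
Hypothesis hd : (0 < d)%N.
Local Notation C := R[i].

Definition pset := [set r : R | exists j rho, density rho /\ r = complex.Re (\tr (rho *m Cobs j))].
Definition mu := inf pset.

Lemma pset_ge0 r : pset r -> 0 <= r.
Proof. by move=> [j [rho [dr ->]]]; exact: (tr_real dr.1 (hC.1 j)).2. Qed.

Lemma pset_le1 r : pset r -> r <= 1.
Proof.
move=> [j [rho [dr ->]]]; rewrite -(sum_Re dr hC) (bigD1 j) //= lerDl.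
by apply: sumr_ge0 => k _; exact: (tr_real dr.1 (hC.1 k)).2.
Qed.

Let i0 : 'I_d := Ordinal hd.
Let v0 : 'cV[C]_d := delta_mx i0 0.

Lemma n_pos : exists j : 'I_n, True.
Proof.
case: n Cobs hC => [|m] Cs [_ hs]; last by exists ord0.
have := congr1 (fun M : 'M[C]_d => M i0 i0) hs; rewrite big_ord0 !mxE eqxx /=.
by move/eqP; rewrite eq_sym oner_eq0.
Qed.

Lemma form_delta1 : form (1%:M : 'M[C]_d) v0 v0 = 1.
Proof. by rewrite /v0 form_delta mxE eqxx. Qed.

Lemma density_ex : density (rk1 v0).
Proof. by apply: rk1_density; rewrite form_delta1 oner_eq0. Qed.

Lemma pset_ne : pset !=set0.
Proof.
have [j _] := n_pos.
by exists (complex.Re (\tr (rk1 v0 *m Cobs j))), j, (rk1 v0); split => //; exact: density_ex.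
Qed.

Lemma pset_hinf : has_inf pset.
Proof. by split; [exact: pset_ne | exists 0 => r /pset_ge0]. Qed.

Lemma mu_ge0 : 0 <= mu.
Proof. by apply: lb_le_inf; [exact: pset_ne | move=> r /pset_ge0]. Qed.

Lemma mu_lb r : pset r -> mu <= r.
Proof. by move=> pr; apply: ge_inf => //; exists 0 => x /pset_ge0. Qed.

Lemma mu_le1 : mu <= 1.
Proof. by have [r pr] := pset_ne; apply: le_trans (mu_lb pr) (pset_le1 pr). Qed.

Lemma mu_adh e : 0 < e -> exists j rho, density rho /\ complex.Re (\tr (rho *m Cobs j)) < mu + e.
Proof.
move=> e0; have [r [j [rho [dr ->]]] lt] := inf_adherent e0 pset_hinf.
by exists j, rho.
Qed.

Lemma form_mu j v : mu%:C * form 1%:M v v <= form (Cobs j) v v.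
Proof.
have [N0|Nn0] := eqVneq (form (1%:M : 'M[C]_d) v v) 0.
  by rewrite N0 mulr0; exact: (hC.1 j).
have dv := rk1_density Nn0.
have [E _] := tr_real dv.1 (hC.1 j).
have hm : mu <= complex.Re (\tr (rk1 v *m Cobs j)) by apply: mu_lb; exists j, (rk1 v).
have : mu%:C <= \tr (rk1 v *m Cobs j) by rewrite E lecR.
rewrite rk1_tr // => h.
have -> : form (Cobs j) v v = form 1%:M v v * ((form 1%:M v v)^-1 * form (Cobs j) v v).
  by rewrite mulrA mulfV // mul1r.
by rewrite mulrC; apply: ler_wpM2l => //; exact: psd1.
Qed.


Lemma wobs x t : observable x -> 0 <= t -> t <= mu -> t < 1 -> observable (wcomb Cobs x t).
Proof.
move=> [px sx] t0 tmu t1; split.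
  move=> j v; change (0 <= form (wcomb Cobs x t j) v v); rewrite /wcomb formZA; apply: mulr_ge0.
    by rewrite ler0c invr_ge0 subr_ge0 ltW.
  rewrite formB formZA subr_ge0.
  have hxj : form (x j) v v <= form 1%:M v v.
    rewrite -sx form_sum (bigD1 j) //= lerDl; apply: sumr_ge0 => k _; exact: px.
  apply: le_trans (form_mu j v).
  apply: le_trans (ler_wpM2l _ hxj) _; first by rewrite ler0c.
  rewrite ler_wpM2r ?lecR //; exact: psd1.
rewrite /wcomb -scaler_sumr sumrB -scaler_sumr hC.2 sx.
rewrite -{1}(scale1r 1%:M) -scalerBl scalerA.
have -> : (1 - t%:C) = (1 - t)%:C by rewrite rmorphB rmorph1.
by rewrite -rmorphM mulVf ?rmorph1 ?scale1r // subr_eq0 gt_eqF.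
Qed.

Definition Wset x := [set t : R | 0 <= t < 1 /\ observable (wcomb Cobs x t)].

Lemma W0 x : observable x -> Wset x 0.
Proof.
move=> ox; split; first by rewrite lexx ltr01.
exact: wobs ox (lexx 0) mu_ge0 ltr01.
Qed.

Lemma Wsup x : observable x -> has_sup (Wset x).
Proof.
move=> ox; split; first by exists 0; exact: W0.
by exists 1 => t [/andP[_ /ltW]].
Qed.

Lemma weight_ge x : observable x -> mu <= weight Cobs x.
Proof.
move=> ox; rewrite /weight -/(Wset x).
have ub := sup_upper_bound (Wsup ox).
have s0 : 0 <= sup (Wset x) by apply: ub; exact: W0.
rewrite leNgt; apply/negP => lt.
set t := (sup (Wset x) + mu) / 2.
have tl : t < mu by rewrite /t; lra.
have tg : sup (Wset x) < t by rewrite /t; lra.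
have Wt : Wset x t.
  split; first by apply/andP; split; [rewrite /t; lra | apply: lt_le_trans tl mu_le1].
  apply: wobs => //; [rewrite /t; lra | exact: ltW | apply: lt_le_trans tl mu_le1].
by have := ub _ Wt; rewrite leNgt tg.
Qed.

Definition indic j : 'I_n -> 'M[C]_d := fun k => if k == j then 1%:M else 0.

Lemma indic_obs j : observable (indic j).
Proof.
split.
  move=> k; rewrite /indic; case: (k == j); first exact: psd1.
  by move=> v; rewrite mulmx0 mul0mx mxE.
rewrite (bigD1 j) //= /indic eqxx big1 ?addr0 // => k /negbTE -> //.
Qed.

Lemma weight_le e : 0 < e -> exists x, observable x /\ weight Cobs x <= mu + e.
Proof.
move=> e0; have [j [rho [dr lt]]] := mu_adh e0.
exists (indic j); split; first exact: indic_obs.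
rewrite /weight -/(Wset (indic j)); apply: le_trans (ltW lt).
apply: ge_sup; first by exists 0; apply: W0; exact: indic_obs.
move=> t [/andP[t0 t1] [pw _]].
have := tr_psd dr.1 (pw j).
rewrite /wcomb /indic eqxx -scalemxAr mxtraceZ pmulr_rge0; last first.
  by rewrite ltcR invr_gt0 subr_gt0.
rewrite mulmxBr -scalemxAr mulmx1 raddfB /= mxtraceZ dr.2 mulr1 subr_ge0.
by rewrite (tr_real dr.1 (hC.1 j)).1 lecR.
Qed.

Lemma bnd_eq : boundariness Cobs = mu.
Proof.
have ne : [set weight Cobs x | x in @observable R d n] !=set0.
  by exists (weight Cobs Cobs), Cobs.
apply/eqP; rewrite eq_le; apply/andP; split; last first.
  by apply: lb_le_inf => // _ [x ox <-]; exact: weight_ge.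
apply/ler_addgt0Pr => e e0.
have [x [ox le]] := weight_le e0.
apply: le_trans le; apply: ge_inf; last by exists x.
by exists mu => _ [y oy <-]; exact: weight_ge.
Qed.

Lemma term_eq rho (A : 'I_n -> 'M[C]_d) j : density rho -> observable A ->
  complex.Re `|\tr (rho *m (Cobs j - A j))| =
  `|complex.Re (\tr (rho *m Cobs j)) - complex.Re (\tr (rho *m A j))|.
Proof.
move=> dr oA.
rewrite mulmxBr raddfB /= (tr_real dr.1 (hC.1 j)).1 (tr_real dr.1 (oA.1 j)).1.
rewrite -rmorphB; exact: (congr1 (@complex.Re R) (normC_real _)).
Qed.

Lemma real_bound (a b : 'I_n -> R) : (forall j, mu <= a j) -> (forall j, 0 <= b j) ->
  \sum_j a j = 1 -> \sum_j b j = 1 -> \sum_j `|a j - b j| <= 2 * (1 - mu).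
Proof.
move=> ha hb sa sb.
have m0 := mu_ge0; have m1 := mu_le1.
have b1 j : b j <= 1.
  by rewrite -sb (bigD1 j) //= lerDl; apply: sumr_ge0 => k _.
apply: le_trans (_ : \sum_j (a j + b j - 2 * mu * b j) <= _).
  apply: ler_sum => j _.
  have h1 : mu * b j <= mu by rewrite ler_piMr.
  have h2 : 0 <= (1 - mu) * b j by rewrite mulr_ge0 // subr_ge0.
  have := ha j; have := hb j.
  case: (lerP (b j) (a j)) => hab.
    lra.
  lra.
rewrite sumrB big_split /= sa sb -mulr_sumr sb; lra.
Qed.

Definition Dset (A : 'I_n -> 'M[C]_d) :=
  [set (\sum_(j < n) @complex.Re R `|\tr (rho *m (Cobs j - A j))|) | rho in @density R d].

Lemma Dset_ub A : observable A -> forall r, Dset A r -> r <= 2 * (1 - mu).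
Proof.
move=> oA _ [rho dr <-].
rewrite (eq_bigr _ (fun j _ => term_eq j dr oA)).
apply: real_bound.
- by move=> j; apply: mu_lb; exists j, rho.
- by move=> j; exact: (tr_real dr.1 (oA.1 j)).2.
- exact: sum_Re.
- exact: sum_Re.
Qed.

Lemma Dset_ne A : Dset A !=set0.
Proof. by eexists; exists (rk1 v0) => //; exact: density_ex. Qed.

Lemma dist_ub A : observable A -> obs_dist Cobs A <= 2 * (1 - mu).
Proof. by move=> oA; apply: ge_sup; [exact: Dset_ne | exact: Dset_ub]. Qed.

Lemma dist_lb e : 0 < e -> exists A, observable A /\ 2 * (1 - mu) - 2 * e < obs_dist Cobs A.
Proof.
move=> e0; have [j [rho [dr lt]]] := mu_adh e0.
exists (indic j); split; first exact: indic_obs.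
have hs : has_sup (Dset (indic j)).
  by split; [exact: Dset_ne | exists (2 * (1 - mu)); apply: Dset_ub; exact: indic_obs].
have := sup_upper_bound hs; rewrite -/(obs_dist Cobs (indic j)) => ub.
apply: lt_le_trans (ub _ _); last by exists rho.
rewrite (eq_bigr _ (fun k _ => term_eq k dr (indic_obs j))).
have hb k : complex.Re (\tr (rho *m indic j k)) = (k == j)%:R.
  rewrite /indic; case: (k == j).
    by rewrite mulmx1 dr.2.
  by rewrite mulmx0 raddf0.
have sa := sum_Re dr hC.
rewrite (bigD1 j) //= in sa; rewrite (bigD1 j) //=.
rewrite hb eqxx (eq_bigr (fun k => complex.Re (\tr (rho *m Cobs k)))); last first.
  move=> k /negbTE kj; rewrite hb kj subr0 ger0_norm //.
  exact: (tr_real dr.1 (hC.1 k)).2.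
have aj1 : complex.Re (\tr (rho *m Cobs j)) <= 1.
  rewrite -sa lerDl; apply: sumr_ge0 => k _; exact: (tr_real dr.1 (hC.1 k)).2.
rewrite (_ : (true%:R : R) = 1) //.
rewrite ler0_norm ?subr_le0 //; lra.
Qed.

Lemma dist_eq : sup [set obs_dist Cobs A | A in @observable R d n] = 2 * (1 - mu).
Proof.
have ne : [set obs_dist Cobs A | A in @observable R d n] !=set0.
  by exists (obs_dist Cobs Cobs), Cobs.
have ub : ubound [set obs_dist Cobs A | A in @observable R d n] (2 * (1 - mu)).
  by move=> _ [A oA <-]; exact: dist_ub.
apply/eqP; rewrite eq_le; apply/andP; split; first exact: ge_sup.
apply/ler_addgt0Pr => e e0.
have [A [oA lt]] := dist_lb (e := e / 2) (divr_gt0 e0 (ltr0Sn _ 1)).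
have := sup_upper_bound (conj ne (ex_intro _ _ ub)) (ex_intro2 _ _ A oA erefl).
move: lt; lra.
Qed.
End Main.

Lemma sup_01 (R : realType) (W : set R) : (forall t, 0 <= t < 1 -> W t) -> (forall t, W t -> t <= 1) -> sup W = 1.
Proof.
move=> hin hub.
have W0 : W 0 by apply: hin; rewrite lexx ltr01.
have hs : has_sup W by split; [exists 0 | exists 1].
have ub := sup_upper_bound hs.
have s0 : 0 <= sup W by exact: ub.
apply/eqP; rewrite eq_le; apply/andP; split; first by apply: ge_sup => //; exists 0.
rewrite leNgt; apply/negP => lt.
have Wt : W ((sup W + 1) / 2) by apply: hin; apply/andP; split; lra.
have := ub _ Wt; lra.
Qed.

Lemma obs_d0 (R : realType) n (A : 'I_n -> 'M[R[i]]_0) : observable A.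
Proof.
split; first by move=> j v; rewrite mxE big_ord0.
by apply/matrixP => [[]].
Qed.

Theorem proposition8 (R : realType) (d n : nat) (Cobs : 'I_n -> 'M[R[i]]_d) :
  observable Cobs ->
  sup [set obs_dist Cobs A | A in @observable R d n] =
  2 * (1 - boundariness Cobs).
Proof.
move=> hC; case: d Cobs hC => [|d'] Cs hC; last first.
  have hd : (0 < d'.+1)%N by [].
  by rewrite (bnd_eq hC hd) (dist_eq hC hd).
have od0 A : obs_dist Cs A = 0.
  rewrite /obs_dist (_ : [set _ | rho in _] = set0) ?sup0 //.
  apply/seteqP; split => // x [rho [_ tr1]].
  by move: tr1; rewrite /mxtrace big_ord0 => /eqP; rewrite eq_sym oner_eq0.
have wt1 x : weight Cs x = 1.
  apply: sup_01 => [t ht|t [/andP[_ /ltW]] //].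
  by split => //; exact: obs_d0.
rewrite /boundariness.
have -> : [set weight Cs x | x in @observable R 0 n] = [set 1].
  apply/seteqP; split => y; first by move=> [x _ <-]; rewrite wt1.
  by move=> ->; exists Cs => //; rewrite wt1.
have -> : [set obs_dist Cs A | A in @observable R 0 n] = [set 0].
  apply/seteqP; split => y; first by move=> [x _ <-]; rewrite od0.
  by move=> ->; exists Cs => //; rewrite od0.
by rewrite inf1 sup1 subrr mulr0.
Qed.
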